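(* Let $n_1,n_2$ be positive integers. Fix $L\in\mathbb{R}^{n_1\times n_2}$ of rank $r$, a basis matrix $G\in\mathbb{R}^{n_1\times r_G}$ with $L_{\mathrm{new}}:=(I-GG^\top)L$ of rank less than $r$, and a matrix $S_0\in\mathbb{R}^{n_1\times n_2}$ with all entries nonzero. For a random subset $\Omega$ of $\{1,\dots,n_1\}\times\{1,\dots,n_2\}$, let $S=\mathcal P_\Omega S_0$, $M=L+S$, and let ''Success'' be the event that $(L_{\mathrm{new}},S,L^\top G)$ is the unique solution of $$\min_{\tilde L_{\mathrm{new}},\tilde S,\tilde X}\|\tilde L_{\mathrm{new}}\|_*+\lambda\|\tilde S\|_1\ \text{ s.t. }\ \tilde L_{\mathrm{new}}+G\tilde X^\top+\tilde S=M.$$ If $m_1<m_2<n_1n_2$, then $\mathbb{P}_{\mathrm{Unif}(m_1)}(\mathrm{Success})\ge\mathbb{P}_{\mathrm{Unif}(m_2)}(\mathrm{Success})$.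
   Context: $\mathcal P_\Omega S_0$ keeps the entries of $S_0$ indexed by $\Omega$ and zeroes the rest. $\mathbb{P}_{\mathrm{Unif}(m)}$ is probability when $\Omega$ is uniformly distributed among all index subsets of size $m$. A basis matrix satisfies $G^\top G=I$. $\lambda>0$ is fixed; the variables range over $\tilde L_{\mathrm{new}},\tilde S\in\mathbb{R}^{n_1\times n_2}$, $\tilde X\in\mathbb{R}^{n_2\times r_G}$. *)

(* Defs.v *)
From HB Require Import structures.
From mathcomp Require Import all_boot all_order all_algebra.
From mathcomp Require Import boolp reals.
From Stdlib Require Import ClassicalEpsilon.
Set Implicit Arguments. Unset Strict Implicit. Unset Printing Implicit Defensive.
Import Order.TTheory GRing.Theory Num.Theory.
Local Open Scope ring_scope.

Section Defs.
Variable R : realType.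

Definition is_svd (n1 n2 : nat) (A : 'M[R]_(n1, n2))
  (U : 'M[R]_(n1, minn n1 n2)) (s : 'rV[R]_(minn n1 n2))
  (V : 'M[R]_(n2, minn n1 n2)) : Prop :=
  [/\ U^T *m U = 1%:M, V^T *m V = 1%:M, (forall i, 0 <= s 0 i)
    & A = U *m diag_mx s *m V^T].

Definition nucnorm (n1 n2 : nat) (A : 'M[R]_(n1, n2)) : R :=
  epsilon (inhabits 0) (fun x : R =>
    exists U s V, is_svd A U s V /\ x = \sum_(i < minn n1 n2) s 0 i).

Definition l1norm (n1 n2 : nat) (A : 'M[R]_(n1, n2)) : R :=
  \sum_(i < n1) \sum_(j < n2) `|A i j|.

Definition projOmega (n1 n2 : nat) (Omega : {set 'I_n1 * 'I_n2})
  (S0 : 'M[R]_(n1, n2)) : 'M[R]_(n1, n2) :=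
  \matrix_(i, j) (if (i, j) \in Omega then S0 i j else 0).

Definition rpca_feasible (n1 n2 rG : nat) (G : 'M[R]_(n1, rG))
  (M : 'M[R]_(n1, n2)) (Ln S : 'M[R]_(n1, n2)) (X : 'M[R]_(n2, rG)) : Prop :=
  Ln + G *m X^T + S = M.

Definition rpca_obj (n1 n2 : nat) (lam : R) (Ln S : 'M[R]_(n1, n2)) : R :=
  nucnorm Ln + lam * l1norm S.

Definition rpca_minimizer (n1 n2 rG : nat) (lam : R) (G : 'M[R]_(n1, rG))
  (M : 'M[R]_(n1, n2)) (Ln S : 'M[R]_(n1, n2)) (X : 'M[R]_(n2, rG)) : Prop :=
  rpca_feasible G M Ln S X /\
  forall Ln' S' X', rpca_feasible G M Ln' S' X' ->
    rpca_obj lam Ln S <= rpca_obj lam Ln' S'.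

Definition rpca_unique_solution (n1 n2 rG : nat) (lam : R) (G : 'M[R]_(n1, rG))
  (M : 'M[R]_(n1, n2)) (Ln S : 'M[R]_(n1, n2)) (X : 'M[R]_(n2, rG)) : Prop :=
  rpca_minimizer lam G M Ln S X /\
  forall Ln' S' X', rpca_minimizer lam G M Ln' S' X' ->
    (Ln', S', X') = (Ln, S, X).

Definition success (n1 n2 rG : nat) (lam : R) (L S0 : 'M[R]_(n1, n2))
  (G : 'M[R]_(n1, rG)) (Omega : {set 'I_n1 * 'I_n2}) : Prop :=
  let S := projOmega Omega S0 in
  let M := L + S in
  let Lnew := (1%:M - G *m G^T) *m L in
  rpca_unique_solution lam G M Lnew S (L^T *m G).

Definition probUnif (n1 n2 : nat) (m : nat) (E : {set 'I_n1 * 'I_n2} -> Prop) : R :=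
  (#|[set Om : {set 'I_n1 * 'I_n2} | (#|Om| == m) && `[< E Om >]]|)%:R /
  (#|[set Om : {set 'I_n1 * 'I_n2} | #|Om| == m]|)%:R.

End Defs.

(* Main.v *)
Require Import Defs.
From HB Require Import structures.
From mathcomp Require Import all_boot all_order all_algebra.
From mathcomp Require Import boolp reals.
From mathcomp Require Import lra.
Import Order.TTheory GRing.Theory Num.Theory.
Local Open Scope ring_scope.

Section Aux.
Variable R : realType.

Lemma l1_tri n1 n2 (A B : 'M[R]_(n1, n2)) :
  l1norm (A + B) <= l1norm A + l1norm B.
Proof.
rewrite /l1norm -big_split; apply: ler_sum => i _.
rewrite -big_split; apply: ler_sum => j _; rewrite mxE; exact: ler_normD.
Qed.

Lemma l1_split n1 n2 (Om Om' : {set 'I_n1 * 'I_n2}) (S0 : 'M[R]_(n1, n2)) :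
  Om' \subset Om ->
  l1norm (projOmega Om S0) =
  l1norm (projOmega Om' S0) + l1norm (projOmega Om S0 - projOmega Om' S0).
Proof.
move=> /subsetP sub; rewrite /l1norm -big_split; apply: eq_bigr => i _.
rewrite -big_split; apply: eq_bigr => j _; rewrite !mxE.
have [h'|h'] := boolP ((i, j) \in Om').
  by rewrite (sub _ h') /= subrr normr0 addr0.
by rewrite /= normr0 add0r subr0.
Qed.

Lemma transfer n1 n2 rG (lam : R) (G : 'M[R]_(n1, rG)) (Ma Mb Ln S S' : 'M[R]_(n1, n2))
  (X : 'M[R]_(n2, rG)) :
  0 <= lam -> Ma = Mb + (S - S') ->
  l1norm S = l1norm S' + l1norm (S - S') ->
  rpca_unique_solution lam G Ma Ln S X -> rpca_unique_solution lam G Mb Ln S' X.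
Proof.
move=> lam0 eM el1 [[fe mn] un].
rewrite /rpca_feasible /rpca_obj in fe mn *.
have eD : S' + (S - S') = S by rewrite addrC subrK.
have lift : forall A B C, A + G *m C^T + B = Mb -> A + G *m C^T + (B + (S - S')) = Ma.
  by move=> A B C h; rewrite eM -h addrA.
have feas' : Ln + G *m X^T + S' = Mb.
  apply: (addIr (S - S')); by rewrite -addrA eD fe eM.
have bnd : forall A B, rpca_obj lam A (B + (S - S')) <=
    rpca_obj lam A B + lam * l1norm (S - S').
  move=> A B; rewrite /rpca_obj -addrA lerD2l -mulrDr.
  by apply: ler_wpM2l => //; apply: l1_tri.
have objS : rpca_obj lam Ln S = rpca_obj lam Ln S' + lam * l1norm (S - S').
  by rewrite /rpca_obj el1 mulrDr addrA.
have mn' : forall A B C, A + G *m C^T + B = Mb ->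
    rpca_obj lam Ln S' <= rpca_obj lam A B.
  move=> A B C h; have := mn _ _ _ (lift _ _ _ h).
  rewrite -/(rpca_obj lam Ln S) -/(rpca_obj lam A _) => h2.
  have := bnd A B; rewrite objS in h2; lra.
split; first by split.
move=> A B C [fb mnb].
have mA : rpca_minimizer lam G Ma A (B + (S - S')) C.
  split; first exact: lift.
  move=> A2 B2 C2 h2.
  have h3 := mn _ _ _ h2.
  have h4 := mnb _ _ _ feas'.
  rewrite -/(rpca_obj lam A B) -/(rpca_obj lam Ln S') in h4.
  rewrite -/(rpca_obj lam Ln S) -/(rpca_obj lam A2 B2) in h3.
  have := bnd A B; rewrite objS in h3; rewrite /rpca_obj in h3 h4 *; lra.
case: (un _ _ _ mA) => -> eB ->; congr (_, _, _).
by apply: (addIr (S - S')); rewrite eB eD.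
Qed.

Lemma success_sub n1 n2 rG (lam : R) (L S0 : 'M[R]_(n1, n2)) (G : 'M[R]_(n1, rG))
  (Om Om' : {set 'I_n1 * 'I_n2}) :
  0 <= lam -> Om' \subset Om -> success lam L S0 G Om -> success lam L S0 G Om'.
Proof.
move=> lam0 sub; rewrite /success; apply: transfer => //.
  by rewrite -addrA (addrC (projOmega Om' S0)) subrK.
exact: l1_split.
Qed.

End Aux.

Section Count.
Variables (T : finType) (P : pred {set T}).
Hypothesis Pdown : forall A B : {set T}, P A -> B \subset A -> P B.

Definition fk k := #|[set Om : {set T} | (#|Om| == k) && P Om]|.

Lemma card_pairs (F : {set {set T}}) (g : {set T} -> {set T}) :
  #|[set p : {set T} * T | (p.1 \in F) && (p.2 \in g p.1)]| = \sum_(B in F) #|g B|.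
Proof.
rewrite -sum1_card.
rewrite [RHS](eq_bigr (fun B => \sum_(x in g B) 1)); last by move=> B _; rewrite sum1_card.
rewrite pair_big_dep /=; apply: eq_bigl => p; by rewrite inE.
Qed.

Lemma count_step k : (fk k.+1 * k.+1 <= fk k * (#|T| - k))%N.
Proof.
rewrite /fk.
set Fk1 := [set Om : {set T} | (#|Om| == k.+1) && P Om].
set Fk := [set Om : {set T} | (#|Om| == k) && P Om].
pose X := [set p : {set T} * T | (p.1 \in Fk1) && (p.2 \in p.1)].
pose Y := [set p : {set T} * T | (p.1 \in Fk) && (p.2 \in ~: p.1)].
have cX : #|X| = (#|Fk1| * k.+1)%N.
  rewrite /X (card_pairs Fk1 id) -sum_nat_const; apply: eq_bigr => B.
  by rewrite inE => /andP[/eqP -> _].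
have cY : #|Y| = (#|Fk| * (#|T| - k))%N.
  rewrite /Y (card_pairs Fk (fun A => ~: A)) -sum_nat_const; apply: eq_bigr => B.
  by rewrite inE => /andP[/eqP <- _]; rewrite -(cardsC B) addKn.
rewrite -cX -cY.
rewrite -(card_in_imset (f := fun p : {set T} * T => (p.1 :\ p.2, p.2)) (D := X)).
  apply: subset_leq_card; apply/subsetP => _ /imsetP [[B x] HB ->].
  move: HB; rewrite !inE /= => /andP[/andP[cB PB] xB].
  rewrite eqxx /= andbT; apply/andP; split.
    by move: cB; rewrite (cardsD1 x) xB.
  exact: Pdown PB (subD1set _ _).
move=> [B x] [B' x']; rewrite !inE /= => /andP[_ xB] /andP[_ xB'] [e1 e2].
subst x'; by rewrite -(setD1K xB) -(setD1K xB') e1.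
Qed.

Variable R : realType.

Definition gk k : R := (fk k)%:R / ('C(#|T|, k))%:R.

Lemma ratio_step k : gk k.+1 <= gk k.
Proof.
rewrite /gk; have [c0|cpos] := posnP 'C(#|T|, k.+1).
  by rewrite c0 invr0 mulr0 divr_ge0.
have ck : (0 < 'C(#|T|, k))%N.
  by move: cpos; rewrite !bin_gt0; apply: ltnW.
rewrite ler_pdivrMr ?ltr0n // mulrAC ler_pdivlMr ?ltr0n // -!natrM ler_nat.
have h := leq_mul (count_step k) (leqnn 'C(#|T|, k)).
rewrite -mulnA -[X in (_ <= X)%N]mulnA -mul_bin_left in h.
rewrite -(leq_pmul2l (ltn0Sn k)).
by rewrite mulnA (mulnC k.+1) -mulnA [X in (_ <= X)%N]mulnCA.
Qed.

Lemma mono m1 m2 : (m1 <= m2)%N -> gk m2 <= gk m1.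
Proof.
elim: m2 => [|m2 IH]; first by rewrite leqn0 => /eqP ->.
rewrite leq_eqVlt => /orP[/eqP -> //| h].
exact: le_trans (ratio_step m2) (IH h).
Qed.

End Count.

Theorem proposition2 (R : realType) (n1 n2 rG r : nat) (lam : R)
  (L : 'M[R]_(n1, n2)) (G : 'M[R]_(n1, rG)) (S0 : 'M[R]_(n1, n2))
  (m1 m2 : nat) :
  (0 < n1)%N -> (0 < n2)%N -> 0 < lam ->
  \rank L = r ->
  G^T *m G = 1%:M ->
  (\rank ((1%:M - G *m G^T) *m L) < r)%N ->
  (forall i j, S0 i j != 0) ->
  (m1 < m2)%N -> (m2 < n1 * n2)%N ->
  probUnif R m1 (success lam L S0 G) >= probUnif R m2 (success lam L S0 G).
Proof.
move=> _ _ lam0 _ _ _ _ lt12 _.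
have Pd : forall A B : {set 'I_n1 * 'I_n2},
    `[< success lam L S0 G A >] -> B \subset A -> `[< success lam L S0 G B >].
  move=> A B /asboolP hA sBA; apply/asboolP; exact: success_sub (ltW lam0) sBA hA.
have := @mono _ (fun Om => `[< success lam L S0 G Om >]) Pd R m1 m2 (ltnW lt12).
by rewrite /gk /fk /probUnif !card_draws.
Qed.
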